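(* Let $n=6k$ with $k\geq 2$ an integer, and let $\mathcal{T}_n$ be the latin square defined below. Then $\mathcal{T}_n$ has a transversal, and every suitable diagonal of $\mathcal{T}_n$ contains the $k$ entries $$(1,0,3),\ (2,1,4),\ \text{and}\ (3j+2,\ n-6j,\ n-3j+3)\ \text{for } j=1,\dots,k-2,$$ i.e. the entries $(1,0,3),(2,1,4),(5,n-6,0),(8,n-12,n-3),\ldots,(3k-4,12,3k+9)$ (all coordinates read modulo $n$).
   Context: Rows, columns and symbols are indexed by $\mathbb{Z}_n=\{0,1,\dots,n-1\}$; all arithmetic on symbols is modulo $n$, and congruence conditions on $a,b$ modulo $2$ or $3$ refer to the representatives in $\{0,\dots,n-1\}$. A latin square is viewed as its set of entries $(r,c,s)$ (symbol $s$ in row $r$, column $c$). For $n=6k$, $k\ge2$, the latin square $\mathcal{T}_n$ is defined by $\mathcal{T}_n[a,b]=$ $a+b+2$ if $(a,b)\in\{(0,2),(1,0)\}$; $a+b+1$ if $(a,b)\in\{(0,1),(2,1)\}$; $a+b-1$ if $(a,b)\in\{(1,1),(1,2),(2,2),(3,1)\}$; $a+b-2$ if $(a,b)=(3,0)$; $a+b+3$ if $b>1$, $b\equiv1\pmod 3$ and $a=0$; $a+b-3$ if $b>1$, $b\equiv 1\pmod 3$ and $a=3$; $a+b-2$ if $4\le a\le 3k-3$, $a\equiv0\pmod3$ and $b\equiv 0\pmod 2$; $a+b+2$ if $4\le a\le 3k-3$, $a\equiv1\pmod3$, $b\equiv0\pmod2$ and $b\ne n-2a+2$; $a+b+1$ if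 $4\le a\le 3k-3$, $a\equiv1\pmod3$ and $b\in\{n-2a+3,n-2a+2\}$; $a+b+1$ if $4\le a\le 3k-3$, $a\equiv 2\pmod3$ and $b=n-2a+4$; $a+b-1$ if $4\le a\le 3k-3$, $a\equiv2\pmod 3$ and $b=n-2a+5$; $a+b$ otherwise. A transversal is a set of $n$ entries containing each row, column and symbol exactly once. For an entry $(r,c,s)$, $\Delta(r,c,s)$ is the unique integer with $\Delta(r,c,s)\equiv s-r-c\pmod n$ and $-n/2<\Delta(r,c,s)\le n/2$. A suitable diagonal is a set of $n$ entries, no two sharing a row or a column, whose $\Delta$-values sum to something congruent to $n/2$ modulo $n$. *)

(* Defs.v *)
From mathcomp Require Import all_boot all_order all_algebra.
Set Implicit Arguments. Unset Strict Implicit. Unset Printing Implicit Defensive.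
Import Order.TTheory GRing.Theory Num.Theory.
From mathcomp Require Import ssrint intdiv.
Local Open Scope ring_scope.
Local Open Scope nat_scope.

Definition entry (k : nat) : finType := ('I_(6*k) * 'I_(6*k) * 'I_(6*k))%type.

(* The offset T_n[a,b] - (a+b), following the case list in order
   (first matching case applies, last case "otherwise" gives 0). *)
Definition Toff (k a b : nat) : int :=
  let n := 6 * k in
  let mid := (4 <= a) && (a <= 3 * k - 3) in
  if ((a == 0) && (b == 2)) || ((a == 1) && (b == 0)) then 2%:Z
  else if ((a == 0) && (b == 1)) || ((a == 2) && (b == 1)) then 1%:Z
  else if [|| (a == 1) && (b == 1), (a == 1) && (b == 2),
              (a == 2) && (b == 2) | (a == 3) && (b == 1)] then (-1)%R
  else if (a == 3) && (b == 0) then (-2)%R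
  else if [&& 1 < b, b %% 3 == 1 & a == 0] then 3%:Z
  else if [&& 1 < b, b %% 3 == 1 & a == 3] then (-3)%R
  else if [&& mid, a %% 3 == 0 & ~~ odd b] then (-2)%R
  else if [&& mid, a %% 3 == 1, ~~ odd b & b != n - 2 * a + 2] then 2%:Z
  else if [&& mid, a %% 3 == 1 & (b == n - 2 * a + 3) || (b == n - 2 * a + 2)] then 1%:Z
  else if [&& mid, a %% 3 == 2 & b == n - 2 * a + 4] then 1%:Z
  else if [&& mid, a %% 3 == 2 & b == n - 2 * a + 5] then (-1)%R
  else 0%:Z.

Definition Tval (k a b : nat) : nat :=
  `|(((a + b)%:Z + Toff k a b) %% (6 * k)%:Z)%Z|%N.

(* The latin square T_n as its set of entries (r, c, s). *)
Definition Tsq (k : nat) : {set entry k} :=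
  [set e : entry k | nat_of_ord e.2 == Tval k e.1.1 e.1.2].

Definition latin_transversal (k : nat) (X : {set entry k}) : Prop :=
  [/\ X \subset Tsq k, #|X| = 6 * k,
      forall r : 'I_(6*k), #|[set e in X | e.1.1 == r]| = 1,
      forall c : 'I_(6*k), #|[set e in X | e.1.2 == c]| = 1 &
      forall s : 'I_(6*k), #|[set e in X | e.2 == s]| = 1].

(* Delta(r,c,s): the representative of s-r-c mod n in (-n/2, n/2]. *)
Definition Delta (k : nat) (e : entry k) : int :=
  let n := 6 * k in
  let m := (nat_of_ord e.2 + 2 * n - e.1.1 - e.1.2) %% n in
  if m <= n./2 then m%:Z else (m%:Z - n%:Z)%R.

Definition suitable_diagonal (k : nat) (D : {set entry k}) : Prop :=
  [/\ D \subset Tsq k, #|D| = 6 * k,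
      {in D &, forall e f : entry k, e != f ->
          (e.1.1 != f.1.1) && (e.1.2 != f.1.2)} &
      ((\sum_(e in D) Delta e)%R = (6 * k)./2 %[mod (6 * k)%:Z])%Z].

Definition has_entry (k : nat) (D : {set entry k}) (r c s : nat) : bool :=
  [exists e in D, [&& nat_of_ord e.1.1 == r %% (6 * k),
                      nat_of_ord e.1.2 == c %% (6 * k) &
                      nat_of_ord e.2 == s %% (6 * k)]].

(* Main.v *)
Require Import Defs.
From mathcomp Require Import all_boot all_order all_algebra zify.
Import GRing.Theory Num.Theory.
Local Open Scope nat_scope.


Definition colf (k a : nat) : nat :=
  if a == 0 then 4 else if a == 1 then 0 else if a == 2 then 1 else if a == 3 then 2
  else if a <= 3*k-3 then (if a %% 3 == 0 then 6*k - 2*a + 7 else 6*k - 2*a + 4)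
  else if a == 3*k-2 then 6 else if a == 3*k-1 then 9 else if a == 3*k then 7
  else if a == 3*k+1 then 5 else if a == 3*k+2 then 3
  else if a <= 6*k-4 then (if a %% 3 == 2 then 2*(6*k-a)+8 else 2*(6*k-a)+5)
  else if a == 6*k-3 then 11 else if a == 6*k-2 then 8 else 10.

Definition colinv (k c : nat) : nat :=
  if c == 0 then 1 else if c == 1 then 2 else if c == 2 then 3 else if c == 3 then 3*k+2
  else if c == 4 then 0 else if c == 5 then 3*k+1 else if c == 6 then 3*k-2
  else if c == 7 then 3*k else if c == 8 then 6*k-2 else if c == 9 then 3*k-1
  else if c == 10 then 6*k-1 else if c == 11 then 6*k-3
  else if (c %% 6 == 0) || (c %% 6 == 2) then (6*k - c + 4) %/ 2
  else if c %% 6 == 1 then (6*k-c+7) %/ 2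
  else if c %% 6 == 4 then 6*k - (c-8) %/ 2
  else 6*k - (c-5) %/ 2.

Lemma colf_lt k a : 2 <= k -> a < 6*k -> colf k a < 6*k.
Proof. move=> hk ha; rewrite /colf; repeat case: ifP => ? ; lia. Qed.

Lemma colinvK k a : 2 <= k -> a < 6*k -> colinv k (colf k a) = a.
Proof. move=> hk ha; rewrite /colf; repeat case: ifP => ?; rewrite /colinv /=; repeat case: ifP => ?; lia. Qed.

Ltac dec1 := match goal with |- context [if ?b then _ else _] =>
  first [ rewrite (_ : b = true); [|lia] | rewrite (_ : b = false); [|lia] | case: ifP => ? ] end.
Ltac dec := repeat (dec1; cbv beta iota).

Definition ttf (k a : nat) : nat :=
  if a == 0 then 3 else if a == 1 then 2 else if a == 2 then 1 else if a == 3 then 0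
  else if a <= 3*k-3 then (if a %% 3 == 1 then 2 else if a %% 3 == 2 then 1 else 0) else 0.

Definition symv (k a : nat) : nat :=
  if a == 0 then 7 else if a == 1 then 3 else if a == 2 then 4 else if a == 3 then 5
  else if a <= 3*k-3 then (if a %% 3 == 0 then 6*k-a+7 else if a %% 3 == 1 then 6*k-a+6 else 6*k-a+5)
  else if a == 3*k-2 then 3*k+4 else if a == 3*k-1 then 3*k+8 else if a == 3*k then 3*k+7
  else if a == 3*k+1 then 3*k+6 else if a == 3*k+2 then 3*k+5
  else if a <= 6*k-4 then (if a %% 3 == 2 then 6*k-a+8 else 6*k-a+5)
  else if a == 6*k-3 then 8 else if a == 6*k-2 then 6 else 9.

Lemma sum_symv k a : 2 <= k -> a < 6*k ->
  (a + colf k a + ttf k a = symv k a) \/ (a + colf k a + ttf k a = symv k a + 6*k).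
Proof. move=> hk ha; rewrite /colf; repeat case: ifP => ?; rewrite /symv /ttf; dec; lia. Qed.

Lemma Toff_colf k a : 2 <= k -> a < 6*k -> Toff k a (colf k a) = Posz (ttf k a).
Proof. move=> hk ha; rewrite /colf; repeat case: ifP => ?; rewrite /Toff /ttf /=; dec; lia. Qed.

Definition syminv (k s : nat) : nat :=
  if s == 3 then 1 else if s == 4 then 2 else if s == 5 then 3 else if s == 6 then 6*k-2
  else if s == 7 then 0 else if s == 8 then 6*k-3 else if s == 9 then 6*k-1
  else if s <= 3*k+3 then (if s %% 3 == 0 then 6*k+8-s else 6*k+5-s)
  else if s == 3*k+4 then 3*k-2 else if s == 3*k+5 then 3*k+2 else if s == 3*k+6 then 3*k+1
  else if s == 3*k+7 then 3*k else if s == 3*k+8 then 3*k-1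
  else if s %% 3 == 2 then 6*k+6-s else if s %% 3 == 0 then 6*k+5-s else 6*k+7-s.

Lemma symv_rng k a : 2 <= k -> a < 6*k -> 3 <= symv k a < 6*k+3.
Proof. move=> hk ha; rewrite /symv; repeat case: ifP => ? ; lia. Qed.

Lemma symvK k a : 2 <= k -> a < 6*k -> syminv k (symv k a) = a.
Proof. move=> hk ha; rewrite /symv; repeat case: ifP => ?; rewrite /syminv /=; dec; lia. Qed.

Lemma modn_small2 x n : 3 <= n -> x < n + 3 -> x %% n = if x < n then x else x - n.
Proof.
move=> hn hx; case: ifP => h; first by rewrite modn_small.
have -> : x = (x - n) + n by lia.
by rewrite modnDr modn_small; lia.
Qed.

Section Trans.
Variables (k : nat) (hk : 2 <= k).
Let n := 6 * k.
Lemma npos : 0 < 6 * k. Proof. lia. Qed.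

Definition colO (r : 'I_(6*k)) : 'I_(6*k) := Ordinal (colf_lt _ _ hk (ltn_ord r)).
Definition symO (r : 'I_(6*k)) : 'I_(6*k) := Ordinal (ltn_pmod (symv k r) npos).
Definition fT (r : 'I_(6*k)) : entry k := (r, colO r, symO r).

Lemma colO_inj : injective colO.
Proof.
move=> r r' /(congr1 val) /= h; apply: val_inj => /=.
by rewrite -(colinvK _ _ hk (ltn_ord r)) h colinvK //.
Qed.

Lemma symO_inj : injective symO.
Proof.
move=> r r' /(congr1 val) /= h; apply: val_inj => /=.
have h1 := symv_rng _ _ hk (ltn_ord r); have h2 := symv_rng _ _ hk (ltn_ord r').
move: h; rewrite !modn_small2; try lia.
move=> h.
have e : symv k r = symv k r' by move: h; do 2 case: ifP; lia.
by rewrite -(symvK _ _ hk (ltn_ord r)) e symvK //.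
Qed.

Lemma fT_Tsq r : fT r \in Tsq k.
Proof.
rewrite inE /= /Tval (Toff_colf _ _ hk (ltn_ord r)).
rewrite -PoszD modz_nat absz_nat.
case: (sum_symv _ _ hk (ltn_ord r)) => ->; first by [].
by rewrite modnDr.
Qed.

Lemma card_proj (p : entry k -> 'I_(6*k)) (h : 'I_(6*k) -> 'I_(6*k)) :
  injective h -> (forall r, p (fT r) = h r) ->
  forall c, #|[set e in fT @: setT | p e == c]| = 1.
Proof.
move=> hi hp c.
have [g hg1 hg2] := injF_bij hi.
rewrite (_ : [set e in _ | _] = [set fT (g c)]) ?cards1 //.
apply/setP => e; rewrite !inE; apply/andP/eqP.
  case => /imsetP [r _ ->]; rewrite hp => /eqP hr.
  by rewrite -hr hg1.
move=> ->; split; first by apply/imsetP; exists (g c).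
by rewrite hp hg2.
Qed.

Lemma trans_exists : exists X : {set entry k}, latin_transversal X.
Proof.
exists (fT @: setT); split.
- by apply/subsetP => e /imsetP [r _ ->]; apply: fT_Tsq.
- rewrite card_imset ?cardsT ?card_ord //.
  by move=> r r' /(congr1 (fun e : entry k => e.1.1)).
- exact: (@card_proj (fun e => e.1.1) id).
- by apply: (@card_proj (fun e => e.1.2) colO colO_inj).
- by apply: (@card_proj (fun e => e.2) symO symO_inj).
Qed.
End Trans.

Definition mneg (k a : nat) : nat :=
  if a == 0 then 0 else if a == 1 then 1 else if a == 2 then 1 else if a == 3 then 3
  else if a <= 3*k-3 then (if a %% 3 == 0 then 2 else if a %% 3 == 2 then 1 else 0) else 0.

Lemma Toff_bnd k a b : (- Posz (mneg k a) <= Toff k a b <= Posz (ttf k a))%R.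
Proof. rewrite /ttf /mneg; repeat case: ifP => ?; rewrite /Toff /=; dec; lia. Qed.

Lemma Toff_abs k a b : (-3 <= Toff k a b <= 3)%R.
Proof. rewrite /Toff /=; repeat case: ifP => ?; lia. Qed.

Lemma Delta_val k (a b s : nat) (T : int) : 2 <= k -> a < 6*k -> b < 6*k ->
  (-3 <= T <= 3)%R -> s = `|(((a+b)%:Z + T) %% (6*k)%:Z)%Z|%N ->
  (let m := (s + 2 * (6*k) - a - b) %% (6*k) in
   if m <= (6*k)./2 then Posz m else (Posz m - Posz (6*k))%R) = T.
Proof.
move=> hk ha hb hT ->.
have h2 : (6*k)./2 = 3 * k by rewrite -divn2; lia.
rewrite h2 /=.
case: T hT => [t|t] hT.
- rewrite -PoszD modz_nat absz_nat.
  have := divn_eq (a+b+t) (6*k).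
  have : (a+b+t) %/ (6*k) < 3 by rewrite ltn_divLR; lia.
  set q := _ %/ _; set s0 := _ %% _ => hq e.
  have hs : s0 < 6*k by rewrite /s0 ltn_mod; lia.
  have -> : (s0 + 2 * (6*k) - a - b) %% (6*k) = t.
    have: q = 0 \/ q = 1 \/ q = 2 by lia.
    case => [hq0|[hq0|hq0]]; rewrite hq0 in e.
    + have -> : s0 + 2 * (6*k) - a - b = 2 * (6*k) + t by lia.
      rewrite modnMDl ?modn_small; lia.
    + have -> : s0 + 2 * (6*k) - a - b = 1 * (6*k) + t by lia.
      rewrite modnMDl ?modn_small; lia.
    + have -> : s0 + 2 * (6*k) - a - b = 0 * (6*k) + t by lia.
      rewrite modnMDl ?modn_small; lia.
  case: ifP => //; lia.
- have -> : ((a+b)%:Z + Negz t = -1 * (6*k)%:Z + Posz (a + b + 6*k - t.+1))%R.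
    rewrite NegzE; lia.
  rewrite modzMDl modz_nat absz_nat.
  have := divn_eq (a + b + 6*k - t.+1) (6*k).
  have : (a + b + 6*k - t.+1) %/ (6*k) < 3 by rewrite ltn_divLR; lia.
  set q := _ %/ _; set s0 := _ %% _ => hq e.
  have hs : s0 < 6*k by rewrite /s0 ltn_mod; lia.
  rewrite NegzE in hT *.
  have -> : (s0 + 2 * (6*k) - a - b) %% (6*k) = 6*k - t.+1.
    have: q = 0 \/ q = 1 \/ q = 2 by lia.
    case => [hq0|[hq0|hq0]]; rewrite hq0 in e.
    + have -> : s0 + 2 * (6*k) - a - b = 2 * (6*k) + (6*k - t.+1) by lia.
      rewrite modnMDl ?modn_small; lia.
    + have -> : s0 + 2 * (6*k) - a - b = 1 * (6*k) + (6*k - t.+1) by lia.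
      rewrite modnMDl ?modn_small; lia.
    + have -> : s0 + 2 * (6*k) - a - b = 0 * (6*k) + (6*k - t.+1) by lia.
      rewrite modnMDl ?modn_small; lia.
  case: ifP => ?; lia.
Qed.

Lemma sum_mid (F : nat -> nat) c p :
  (forall j, j < p -> F (3*j+4) + F (3*j+5) + F (3*j+6) = c) ->
  \sum_(4 <= r < 4 + 3 * p) F r = c * p.
Proof.
elim: p => [|p IH] h; first by rewrite big_geq ?muln0.
have -> : 4 + 3 * p.+1 = (4 + 3 * p + 2).+1 by lia.
rewrite big_nat_recr; last lia.
have -> : 4 + 3 * p + 2 = (4 + 3 * p + 1).+1 by lia.
rewrite big_nat_recr; last lia.
have -> : 4 + 3 * p + 1 = (4 + 3 * p).+1 by lia.
rewrite big_nat_recr; last lia.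
rewrite IH; last by move=> j hj; apply: h; lia.
have := h p (ltnSn p).
have -> : 3 * p+4 = 4 + 3 * p by lia.
have -> : 3 * p+5 = (4 + 3 * p).+1 by lia.
have -> : 3 * p+6 = (4 + 3 * p + 1).+1 by lia.
rewrite mulnS => hc; change (c * p + F (4+3 * p) + F (4+3 * p).+1 + F (4+3 * p).+2 = c + c * p). have e: (4+3 * p+1).+1 = (4+3 * p).+2 by lia. rewrite e in hc. lia.
Qed.

Lemma sum_split (F : nat -> nat) k : 2 <= k ->
  \sum_(r < 6*k) F r = F 0 + F 1 + F 2 + F 3 + \sum_(4 <= r < 4 + 3*(k-2)) F r
     + \sum_(3*k-2 <= r < 6*k) F r.
Proof.
move=> hk; rewrite -(big_mkord xpredT F) (big_cat_nat _ (n:=4)) //; last lia.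
rewrite (big_cat_nat _ (n:=3*k-2) (m:=4)); [|lia|lia].
have -> : 3*k-2 = 4 + 3*(k-2) by lia.
have h4 : \sum_(0 <= i < 4) F i = F 0 + F 1 + F 2 + F 3 by rewrite unlock /= !addnA addn0.
rewrite h4; exact: addnA.
Qed.


Lemma sum_ttf k : 2 <= k -> \sum_(r < 6*k) ttf k r = 3*k.
Proof.
move=> hk; rewrite sum_split // (@sum_mid _ 3).
  rewrite big_nat_cond big1; last first.
    by move=> i /andP [/andP [h1 h2] _]; rewrite /ttf; dec.
  rewrite /ttf /=; lia.
by move=> j hj; rewrite /ttf; dec.
Qed.

Lemma sum_mneg k : 2 <= k -> \sum_(r < 6*k) mneg k r = 3*k - 1.
Proof.
move=> hk; rewrite sum_split // (@sum_mid _ 3).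
  rewrite big_nat_cond big1; last first.
    by move=> i /andP [/andP [h1 h2] _]; rewrite /mneg; dec.
  rewrite /mneg /=; lia.
by move=> j hj; rewrite /mneg; dec.
Qed.

Definition fc (k a : nat) : nat := if a == 1 then 0 else if a == 2 then 1 else 6*k - 2*a + 4.

Lemma forced k a b : 2 <= k -> b < 6*k ->
  (a == 1) || (a == 2) || ((4 <= a <= 3*k-3) && (a %% 3 == 2)) ->
  Toff k a b = Posz (ttf k a) -> b = fc k a.
Proof.
Time (move=> hk hb; case/orP => [/orP [] /eqP -> | /andP [h1 h2]];
 [ rewrite /ttf /fc /Toff /=; dec; lia
 | rewrite /ttf /fc /Toff /=; dec; lia
 | rewrite /ttf /fc; dec; rewrite /Toff /=; dec; lia ]).
Qed.

Section Diag.
Variables (k : nat) (hk : 2 <= k) (D : {set entry k}) (hD : suitable_diagonal D).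

Lemma rows_inj : {in D &, injective (fun e : entry k => e.1.1)}.
Proof.
case: hD => _ _ dist _.
move=> e f eD fD h; apply/eqP; apply/negPn/negP => ne.
by move: (dist e f eD fD ne); rewrite h eqxx.
Qed.

Lemma rowsT : [set e.1.1 | e in D] = setT.
Proof.
case: hD => _ cardD _ _.
apply/eqP; rewrite eqEcard subsetT cardsT card_ord card_in_imset ?cardD ?leqnn //; exact: rows_inj.
Qed.

Lemma rows_onto (r : 'I_(6*k)) : exists2 e, e \in D & e.1.1 = r.
Proof.
have : r \in [set e.1.1 | e in D] by rewrite rowsT inE.
by case/imsetP => e eD ->; exists e.
Qed.

Lemma sumD (F : nat -> nat) : \sum_(e in D) F e.1.1 = \sum_(r < 6*k) F r.
Proof.
rewrite -(big_imset (fun r : 'I_(6*k) => F r) rows_inj) /= rowsT.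
by apply: eq_bigl => r; rewrite in_setT.
Qed.

Lemma diag_max e : e \in D -> Toff k e.1.1 e.1.2 = Posz (ttf k e.1.1).
Proof.
case: (hD) => sub cardD dist hsum.
set S := (\sum_(e in D) Toff k e.1.1 e.1.2)%R.
have hS : (\sum_(e in D) Delta e)%R = S.
  apply: eq_bigr => f fD.
  have fT := subsetP sub f fD; rewrite inE in fT.
  rewrite /Delta /=.
  apply: (Delta_val _ _ _ _ _ hk (ltn_ord _) (ltn_ord _) (Toff_abs _ _ _) (eqP fT)).
have up : (S <= Posz (3*k))%R.
  rewrite -(sum_ttf _ hk) -sumD (big_morph Posz PoszD (erefl _)).
  by apply: ler_sum => f _; case/andP: (Toff_bnd k f.1.1 f.1.2).
have lo : (- Posz (3*k - 1) <= S)%R.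
  rewrite -(sum_mneg _ hk) -sumD (big_morph Posz PoszD (erefl _)) -sumrN.
  by apply: ler_sum => f _; case/andP: (Toff_bnd k f.1.1 f.1.2).
have hd : ((6*k)%:Z %| (S - Posz (3*k))%R)%Z.
  rewrite -eqz_mod_dvd; apply/eqP; rewrite -hS hsum.
  by have -> : (6*k)./2 = 3 * k by rewrite -divn2; lia.
have S3 : S = Posz (3*k).
  move: hd; rewrite dvdzE absz_nat.
  set x := `|(S - Posz (3*k))%R|%N => hx.
  have hx0 : x = 0.
    case: (posnP x) => // hxp.
    have := dvdn_leq hxp hx. rewrite /x; lia.
  move: hx0; rewrite /x; lia.
have hz : forall f, f \in D -> (Posz (ttf k f.1.1) - Toff k f.1.1 f.1.2)%R = 0%R.
  apply: psumr_eq0P.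
    by move=> f _; case/andP: (Toff_bnd k f.1.1 f.1.2) => _ h; rewrite subr_ge0.
  rewrite sumrB -/S S3 -(sum_ttf _ hk) -sumD (big_morph Posz PoszD (erefl _)).
  by rewrite subrr.
move=> eD; have := hz e eD; lia.
Qed.

Lemma gen_entry a : a < 6*k ->
  (a == 1) || (a == 2) || ((4 <= a <= 3*k-3) && (a %% 3 == 2)) ->
  has_entry D a (fc k a) (a + fc k a + ttf k a).
Proof.
move=> ha hc.
case: (hD) => sub _ _ _.
have [e eD he] := rows_onto (Ordinal ha).
have hmax := diag_max e eD.
rewrite he /= in hmax.
have hb := forced _ _ _ hk (ltn_ord e.1.2) hc hmax.
have eT := subsetP sub e eD; rewrite inE in eT.
apply/existsP; exists e; rewrite eD /= (eqP eT) /Tval he /= hmax -PoszD modz_nat absz_nat.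
rewrite -hb (modn_small ha) (modn_small (ltn_ord e.1.2)) !eqxx.
by [].
Qed.
End Diag.

Theorem lemma7 (k : nat) (hk : 2 <= k) :
  (exists X : {set entry k}, latin_transversal X) /\
  (forall D : {set entry k}, suitable_diagonal D ->
     [/\ has_entry D 1 0 3, has_entry D 2 1 4 &
         forall j : nat, 1 <= j <= k - 2 ->
           has_entry D (3 * j + 2) (6 * k - 6 * j) (6 * k - 3 * j + 3)]).
Proof.
split; first exact: (trans_exists k hk).
move=> D hD; split.
- have := gen_entry k hk D hD (1); rewrite /fc /ttf /=; apply; lia.
- have := gen_entry k hk D hD (2); rewrite /fc /ttf /=; apply; lia.
- move=> j hj.
  have := gen_entry k hk D hD (3*j+2).
  have -> : fc k (3*j+2) = 6*k - 6*j by rewrite /fc; dec; lia.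
  have -> : ttf k (3*j+2) = 1 by rewrite /ttf; dec.
  have -> : 3*j+2 + (6*k - 6*j) + 1 = 6 * k - 3 * j + 3 by lia.
  apply; lia.
Qed.
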